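(* Let $S$ be a finite set and let $\Pi(S)$ be the lattice of partitions of $S$ ordered by refinement. For indeterminates $q_1,q_2$ define the matrix $\mu_{q_1,q_2}$ on $\Pi(S)\times\Pi(S)$ by \[ \mu_{q_1,q_2}(\sigma,\pi)=\begin{cases}\prod_{i=1}^k\prod_{j=1}^{\lambda_i-1}(q_2-jq_1) & \text{if }\sigma\le\pi=\{B_1,\dots,B_k\}\text{ and }B_i\text{ is partitioned into }\lambda_i\text{ blocks in }\sigma,\\ 0&\text{if }\sigma\not\le\pi.\end{cases} \] Then, as an identity of matrices with entries in $\mathbb{Z}[q_1,q_2,q_3]$, \[ \mu_{q_1,q_2}\,\mu_{q_2,q_3}=\mu_{q_1,q_3} \] (matrix multiplication).
   Context: $\sigma\le\pi$ means that $\sigma$ refines $\pi$ (every block of $\sigma$ is contained in a block of $\pi$). Matrix multiplication is $(M N)(\sigma,\pi)=\sum_{\tau\in\Pi(S)}M(\sigma,\tau)N(\tau,\pi)$. *)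

(* Defs.v *)
From HB Require Import structures.
From mathcomp Require Import all_boot all_order all_algebra.
Set Implicit Arguments. Unset Strict Implicit. Unset Printing Implicit Defensive.
Import GRing.Theory.
Local Open Scope ring_scope.

Definition is_partition (T : finType) (P : {set {set T}}) : bool :=
  partition P [set: T].

Definition refines (T : finType) (sigma pi : {set {set T}}) : bool :=
  [forall B in sigma, exists C in pi, B \subset C].

Definition nblocks_in (T : finType) (sigma : {set {set T}}) (B : {set T}) : nat :=
  #|[set C in sigma | C \subset B]|.

Definition mu (R : comRingType) (T : finType) (q1 q2 : R)
    (sigma pi : {set {set T}}) : R :=
  if refines sigma pi then
    \prod_(B in pi) \prod_(1 <= j < nblocks_in sigma B) (q2 - j%:R * q1)
  else 0.

(* Main.v *)
Require Import Defs.
From HB Require Import structures.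
From mathcomp Require Import all_boot all_order all_algebra.
Set Implicit Arguments. Unset Strict Implicit. Unset Printing Implicit Defensive.
Import GRing.Theory.

Section Sets.
Variable T : finType.
Implicit Types (x : T) (A B C D E X Y Z : {set T}) (P Q S : {set {set T}}).

Lemma tI_eq P A B x : trivIset P -> A \in P -> B \in P -> x \in A -> x \in B -> A = B.
Proof. by move=> tP AP BP xA xB; rewrite -(def_pblock tP AP xA) (def_pblock tP BP xB). Qed.

Lemma tI_disj P A B x : trivIset P -> A \in P -> B \in P -> A != B -> x \in A -> x \in B = false.
Proof.
move=> tP AP BP nAB xA; apply/negP => xB.
by rewrite (tI_eq tP AP BP xA xB) eqxx in nAB.
Qed.

Lemma refinesP S Q : reflect (forall B, B \in S -> exists2 C, C \in Q & B \subset C) (refines S Q).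
Proof.
apply: (iffP forall_inP) => H B /H; first by move/exists_inP.
by move=> ?; apply/exists_inP.
Qed.

Lemma refines_sub S Q B : refines S Q -> B \in S -> exists2 C, C \in Q & B \subset C.
Proof. by move/refinesP => h /h. Qed.

Lemma refines_trans P Q S : refines P Q -> refines Q S -> refines P S.
Proof.
move=> /refinesP h1 /refinesP h2; apply/refinesP => B /h1 [C /h2 [E ES CE] BC].
by exists E => //; apply: subset_trans CE.
Qed.

Lemma coverP x P : reflect (exists2 B, B \in P & x \in B) (x \in cover P).
Proof. exact: bigcupP. Qed.

Lemma nonempty_of P B : set0 \notin P -> B \in P -> exists x, x \in B.
Proof. by move=> nP BP; apply/set0Pn; apply: contraNneq nP => <-. Qed.

Definition rm X P := [set B :\: X | B in P] :\ set0.

Lemma rmP X P C : reflect (C != set0 /\ exists2 B, B \in P & C = B :\: X) (C \in rm X P).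
Proof.
rewrite !inE; apply: (iffP andP) => [[h /imsetP[B BP eC]]|[h [B BP eC]]].
  by split => //; exists B.
by split => //; apply/imsetP; exists B.
Qed.

Lemma partition_rm X P D : partition P D -> partition (rm X P) (D :\: X).
Proof.
case/and3P => /eqP cP tP nP; apply/and3P; split.
- apply/eqP/setP => x; rewrite -cP inE; apply/coverP/andP.
    case=> C /rmP [_ [B BP ->]]; rewrite inE => /andP[xX xB]; split => //.
    by apply/coverP; exists B.
  case=> xX /coverP [B BP xB]; exists (B :\: X); last by rewrite inE xX.
  apply/rmP; split; last by exists B.
  by apply/set0Pn; exists x; rewrite inE xX.
- apply/trivIsetP => C1 C2 /rmP[_ [B1 B1P ->]] /rmP[_ [B2 B2P ->]] ne.
  have ne' : B1 != B2 by apply: contraNneq ne => ->.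
  move/trivIsetP: tP => /(_ _ _ B1P B2P ne') d.
  by apply: disjointW d; apply: subsetDl.
- by rewrite !inE eqxx.
Qed.

Lemma refines_rm X P Q : refines P Q -> refines (rm X P) (rm X Q).
Proof.
move/refinesP => h; apply/refinesP => C /rmP [n0 [B BP eC]]; subst C.
case: (h B BP) => E EQ BE; exists (E :\: X); last by apply: setSD.
apply/rmP; split; last by exists E.
apply: contraNneq n0 => e0; apply/eqP; apply/setP => x; rewrite !inE.
apply/negbTE/negP => /andP [xX xB].
have: x \in E :\: X by rewrite inE xX (subsetP BE).
by rewrite e0 inE.
Qed.

Lemma rm_eq X P E : trivIset P -> set0 \notin P -> E \in P -> X \subset E ->
  rm X P = (P :\ E) :|: ([set E :\: X] :\ set0).
Proof.
move=> tP nP EP XE; apply/setP => C; apply/rmP/idP.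
  case=> n0 [B BP eC]; subst C; rewrite !inE.
  case: (eqVneq B E) => [eBE|nBE]; first by subst B; rewrite eqxx n0 orbT.
  have -> : B :\: X = B.
    apply/setP => x; rewrite inE; case xB: (x \in B); rewrite ?andbF ?andbT //.
    by apply/negP => /(subsetP XE); rewrite (tI_disj tP BP EP nBE xB).
  by rewrite nBE BP.
rewrite !inE => /orP [/andP[nCE CP]|/andP[n0 /eqP eC]]; last by subst C; split=> //; exists E.
have Cn0 : C != set0 by apply: contraNneq nP => <-.
split => //; exists C => //.
apply/setP => x; rewrite inE; case xC: (x \in C); rewrite ?andbF ?andbT //.
by symmetry; apply/negP => /(subsetP XE); rewrite (tI_disj tP CP EP nCE xC).
Qed.

End Sets.

Section NB.
Variable T : finType.
Implicit Types (x : T) (A B C D E X Y Z : {set T}) (P Q S : {set {set T}}).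

Lemma nbE Q A : nblocks_in Q A = #|[set C in Q | C \subset A]|.
Proof. by []. Qed.

Lemma nb_U1_in Q E A : E \notin Q -> E \subset A -> nblocks_in (E |: Q) A = (nblocks_in Q A).+1.
Proof.
move=> EQ EA; rewrite !nbE.
have -> : [set C in E |: Q | C \subset A] = E |: [set C in Q | C \subset A].
  apply/setP => C; rewrite !inE; case: (eqVneq C E) => [->|] //=; by rewrite EA.
by rewrite cardsU1 inE (negbTE EQ).
Qed.

Lemma nb_U1_out Q E A : ~~ (E \subset A) -> nblocks_in (E |: Q) A = nblocks_in Q A.
Proof.
move=> EA; rewrite !nbE; apply: eq_card => C; rewrite !inE.
by case: (eqVneq C E) => [->|] //=; rewrite (negbTE EA) andbF.
Qed.

Lemma nb_D1_in Q C A : C \in Q -> C \subset A -> nblocks_in Q A = (nblocks_in (Q :\ C) A).+1.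
Proof.
move=> CQ CA; rewrite !nbE (cardsD1 C) inE CQ CA /=; congr (_ + _).
by apply: eq_card => E; rewrite !inE andbA.
Qed.

Lemma nb_D1_out Q C A : ~~ (C \subset A) -> nblocks_in (Q :\ C) A = nblocks_in Q A.
Proof.
move=> CA; rewrite !nbE; apply: eq_card => E; rewrite !inE.
by case: (eqVneq E C) => [->|] //=; rewrite (negbTE CA) andbF.
Qed.

Lemma nb_UX Q A X : (forall C, C \in Q -> [disjoint C & X]) ->
  nblocks_in Q (A :|: X) = nblocks_in Q A.
Proof.
move=> dQ; rewrite !nbE; apply: eq_card => C; rewrite !inE.
case CQ: (C \in Q) => //=; apply/idP/idP => h; last by apply: subset_trans h (subsetUl _ _).
apply/subsetP => x xC; move: (subsetP h x xC); rewrite inE => /orP[//|xX].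
by rewrite (disjointFr (dQ C CQ) xC) in xX.
Qed.

Lemma nb_set0 Q : set0 \notin Q -> nblocks_in Q set0 = 0.
Proof.
move=> nQ; rewrite nbE.
have -> : [set C in Q | C \subset set0] = set0.
  apply/setP => C; rewrite !inE subset0; case: (eqVneq C set0) => [->|]; by rewrite ?(negbTE nQ) ?andbF.
by rewrite cards0.
Qed.

Lemma not_sub_disj E A : E != set0 -> [disjoint E & A] -> ~~ (E \subset A).
Proof.
move=> /set0Pn [x xE] d; apply/negP => /subsetP /(_ x xE).
by rewrite (disjointFr d xE).
Qed.

End NB.

Section Part.
Variable T : finType.
Implicit Types (x : T) (A B C D E X Y Z : {set T}) (P Q S : {set {set T}}).

Lemma disjP A B : reflect (forall x, x \in A -> x \in B -> False) [disjoint A & B].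
Proof.
apply: (iffP idP) => [d x xA xB | h]; first by rewrite (disjointFr d xA) in xB.
rewrite -setI_eq0; apply/eqP; apply/setP => x; rewrite !inE.
by apply/negbTE/negP => /andP[xA xB]; apply: (h x).
Qed.

Lemma partition_U1 Q D E : partition Q D -> E != set0 -> [disjoint E & D] ->
  partition (E |: Q) (E :|: D).
Proof.
case/and3P => /eqP cQ tQ nQ En0 dED.
have EQ : E \notin Q.
  apply/negP => EQ; case/set0Pn: En0 => x xE.
  have : x \in D by rewrite -cQ; apply/coverP; exists E.
  by rewrite (disjointFr dED xE).
apply/and3P; split.
- by rewrite /cover big_setU1 //= -/(cover Q) cQ.
- apply: trivIsetU; [exact: trivIset1 | exact: tQ |].
  by rewrite cover1 cQ.
- by rewrite !inE negb_or eq_sym En0.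
Qed.

Lemma partition_D1 Q D B : partition Q D -> B \in Q -> partition (Q :\ B) (D :\: B).
Proof.
case/and3P => /eqP cQ tQ nQ BQ; apply/and3P; split.
- by rewrite coverD1 // cQ.
- exact: trivIsetS (subD1set _ _) tQ.
- by rewrite !inE negb_and nQ orbT.
Qed.

End Part.

Section Ring.
Variable R : comRingType.
Local Open Scope ring_scope.

Definition f (a b : R) (m : nat) : R := \prod_(1 <= j < m) (b - j%:R * a).
Definition step (a b : R) (m : nat) : R := if m == 0%N then 1 else b - m%:R * a.
Definition w (T : finType) (a b : R) (S Q : {set {set T}}) : R :=
  \prod_(B in Q) f a b (nblocks_in S B).

Lemma f0 a b : f a b 0 = 1. Proof. by rewrite /f big_geq. Qed.
Lemma f1 a b : f a b 1 = 1. Proof. by rewrite /f big_geq. Qed.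
Lemma fS a b m : f a b m.+1 = f a b m * step a b m.
Proof.
case: m => [|m]; first by rewrite f1 f0 /step mulr1.
by rewrite /f big_nat_recr.
Qed.

Lemma mu_w (T : finType) a b (S Q : {set {set T}}) :
  mu a b S Q = if refines S Q then w a b S Q else 0.
Proof. by []. Qed.

Lemma sum_between (T : finType) (a b c : R) (D : {set T}) (sg pi : {set {set T}}) :
  \sum_(t | partition t D) mu a b sg t * mu b c t pi =
  \sum_(t | partition t D && (refines sg t && refines t pi)) w a b sg t * w b c t pi.
Proof.
rewrite (bigID (fun t => refines sg t && refines t pi)) /= [X in _ + X]big1 ?addr0.
  by apply: eq_bigr => t /andP[_ /andP[h1 h2]]; rewrite !mu_w h1 h2.
move=> t /andP[_]; rewrite !mu_w.
by case: (refines sg t); case: (refines t pi) => //= _; rewrite ?mul0r ?mulr0.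
Qed.

End Ring.

Section Setup.
Variable T : finType.
Implicit Types (x : T) (A B C E Z : {set T}) (P Q S : {set {set T}}).
Variables (D : {set T}) (sg pi : {set {set T}}) (X Y : {set T}).
Hypotheses (psg : partition sg D) (ppi : partition pi D) (Xs : X \in sg)
  (Ypi : Y \in pi) (XY : X \subset Y).

Lemma tsg : trivIset sg. Proof. by case/and3P: psg. Qed.
Lemma nsg : set0 \notin sg. Proof. by case/and3P: psg. Qed.
Lemma csg : cover sg = D. Proof. by case/and3P: psg => /eqP. Qed.
Lemma tpi : trivIset pi. Proof. by case/and3P: ppi. Qed.
Lemma npi : set0 \notin pi. Proof. by case/and3P: ppi. Qed.
Lemma cpi : cover pi = D. Proof. by case/and3P: ppi => /eqP. Qed.

Lemma Xn0 : X != set0.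
Proof. by apply/negP => /eqP X0; move: nsg; rewrite -X0 Xs. Qed.

Lemma XD : X \subset D.
Proof. by rewrite -csg; apply: bigcup_sup. Qed.

Lemma UD_eq : X :|: (D :\: X) = D.
Proof.
apply/setP => x; rewrite !inE; move: (subsetP XD x).
by case: (x \in X) => //= /(_ isT) ->.
Qed.

Lemma sg_rm : rm X sg = sg :\ X.
Proof.
rewrite (rm_eq tsg nsg Xs (subxx X)) setDv.
have -> : [set set0] :\ (set0 : {set T}) = set0.
  by apply/setP => C; rewrite !inE; case: (C == set0).
by rewrite setU0.
Qed.

Variable R : comRingType.
Section Tp.
Variable tp : {set {set T}}.
Hypotheses (ptp : partition tp (D :\: X)) (r1 : refines (rm X sg) tp)
  (r2 : refines tp (rm X pi)).

Lemma ttp : trivIset tp. Proof. by case/and3P: ptp. Qed.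
Lemma ntp : set0 \notin tp. Proof. by case/and3P: ptp. Qed.
Lemma ctp : cover tp = D :\: X. Proof. by case/and3P: ptp => /eqP. Qed.

Lemma tp_sub C : C \in tp -> C \subset D :\: X.
Proof. by move=> CP; rewrite -ctp; apply: bigcup_sup. Qed.

Lemma tp_disj C : C \in tp -> [disjoint C & X].
Proof.
move=> CP; apply/disjP => x xC xX; move: (subsetP (tp_sub CP) x xC).
by rewrite inE xX.
Qed.

Lemma tp_n0 C : C \in tp -> C != set0.
Proof. by move=> CP; apply/negP => /eqP C0; move: ntp; rewrite -C0 CP. Qed.

Lemma Xtp : X \notin tp.
Proof.
apply/negP => XP; case/set0Pn: Xn0 => x xX.
by move/disjP: (tp_disj XP) => /(_ x xX xX).
Qed.

Definition tau0 := X |: tp.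
Definition tauC C := (C :|: X) |: (tp :\ C).

Lemma p_tau0 : partition tau0 D.
Proof.
rewrite -UD_eq; apply: partition_U1 ptp Xn0 _.
by apply/disjP => x xX; rewrite inE xX.
Qed.

Lemma r_s_tau0 : refines sg tau0.
Proof.
move/refinesP: r1 => h; apply/refinesP => B BS.
case: (eqVneq B X) => [->|nBX]; first by exists X; rewrite ?setU11.
have : B \in rm X sg by rewrite sg_rm !inE nBX.
by case/h => C CP BC; exists C; rewrite // !inE CP orbT.
Qed.

Lemma r_tau0_pi : refines tau0 pi.
Proof.
move/refinesP: r2 => h; apply/refinesP => B; rewrite !inE => /orP[/eqP->|BP].
  by exists Y.
case/h: BP => E /rmP [_ [E' E'P ->]] BE; exists E' => //.
by apply: subset_trans BE (subsetDl _ _).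
Qed.

Lemma rm_tau0 : rm X tau0 = tp.
Proof.
case/and3P: p_tau0 => _ t0 n0.
rewrite (rm_eq t0 n0 (setU11 _ _) (subxx X)) setDv setU1K ?Xtp //.
have -> : [set set0] :\ (set0 : {set T}) = set0.
  by apply/setP => C; rewrite !inE; case: (C == set0).
by rewrite setU0.
Qed.


Section TauC.
Variable C : {set T}.
Hypotheses (CP : C \in tp) (CZ : C \subset Y :\: X).

Lemma CX_n0 : C :|: X != set0.
Proof.
case/set0Pn: Xn0 => x xX; apply/set0Pn; exists x; by rewrite inE xX orbT.
Qed.

Lemma CX_ntp : C :|: X \notin tp.
Proof.
apply/negP => h; case/set0Pn: Xn0 => x xX.
by move/disjP: (tp_disj h) => /(_ x); rewrite inE xX orbT => /(_ isT isT).
Qed.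

Lemma p_tauC : partition (tauC C) D.
Proof.
have -> : D = (C :|: X) :|: ((D :\: X) :\: C).
  apply/setP => x; rewrite !inE; move: (subsetP XD x) (subsetP (tp_sub CP) x).
  rewrite inE; case: (x \in X); case: (x \in C); case: (x \in D) => //=;
    try by move=> h1 h2; first [by have := h1 isT | by have := h2 isT].
apply: partition_U1 (partition_D1 ptp CP) CX_n0 _.
apply/disjP => x; rewrite !inE => /orP[->|->]; by rewrite ?andbF.
Qed.

Lemma r_s_tauC : refines sg (tauC C).
Proof.
move/refinesP: r1 => h; apply/refinesP => B BS.
case: (eqVneq B X) => [->|nBX]; first by exists (C :|: X); rewrite ?setU11 ?subsetUr.
have : B \in rm X sg by rewrite sg_rm !inE nBX.
case/h => E EP BE; case: (eqVneq E C) => [eEC|nEC].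
  by exists (C :|: X); rewrite ?setU11 //; apply: subset_trans (subsetUl _ _); rewrite -eEC.
by exists E; rewrite // !inE nEC EP !orbT.
Qed.

Lemma r_tauC_pi : refines (tauC C) pi.
Proof.
move/refinesP: r2 => h; apply/refinesP => B; rewrite !inE => /orP[/eqP->|/andP[_ BP]].
  exists Y => //; apply/subsetP => x; rewrite inE => /orP[xC|xX].
    by move: (subsetP CZ x xC); rewrite inE => /andP[].
  exact: (subsetP XY).
case/h: BP => E /rmP [_ [E' E'P ->]] BE; exists E' => //.
by apply: subset_trans BE (subsetDl _ _).
Qed.

Lemma CXmX : (C :|: X) :\: X = C.
Proof.
apply/setP => x; rewrite !inE; case xX: (x \in X); rewrite ?orbT ?orbF //=.
symmetry; apply/negbTE/negP => xC; move/disjP: (tp_disj CP) => /(_ x xC).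
by rewrite xX => /(_ isT).
Qed.

Lemma rm_tauC : rm X (tauC C) = tp.
Proof.
case/and3P: p_tauC => _ t0 n0.
rewrite (rm_eq t0 n0 (setU11 _ _) (subsetUr _ _)) CXmX.
rewrite setU1K; last by rewrite !inE negb_and CX_ntp orbT.
have -> : [set C] :\ set0 = [set C].
  apply/setP => E; rewrite !inE.
  by case: (eqVneq E C) => [->|_]; rewrite ?andbF // (tp_n0 CP).
by rewrite setUC setD1K.
Qed.

End TauC.

Definition Fib := tau0 |: [set tauC C | C in [set C in tp | C \subset Y :\: X]].

Lemma tau0_notin : tau0 \notin [set tauC C | C in [set C in tp | C \subset Y :\: X]].
Proof.
apply/imsetP => [[C]]; rewrite inE => /andP[CP CZ] e.
have : X \in tauC C by rewrite -e setU11.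
rewrite !inE (negbTE Xtp) andbF orbF => /eqP eX.
case/set0Pn: (tp_n0 CP) => x xC.
have : x \in X by rewrite eX inE xC.
by move/disjP: (tp_disj CP) => /(_ x xC).
Qed.

Lemma tauC_inj : {in [set C in tp | C \subset Y :\: X] &, injective tauC}.
Proof.
move=> C1 C2; rewrite !inE => /andP[C1P _] /andP[C2P _] e.
have : C1 :|: X \in tauC C2 by rewrite -e setU11.
rewrite !inE => /orP[/eqP h|/andP[_ h]].
  by rewrite -(CXmX C1P) h (CXmX C2P).
by move: (CX_ntp C1); rewrite h.
Qed.


Lemma fib_char tau :
  (partition tau D && (refines sg tau && refines tau pi)) && (rm X tau == tp) = (tau \in Fib).
Proof.
apply/idP/idP; last first.
  rewrite !inE => /orP[/eqP->|/imsetP[C]].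
    by rewrite p_tau0 r_s_tau0 r_tau0_pi rm_tau0 eqxx.
  rewrite inE => /andP[CP CZ] ->.
  by rewrite p_tauC // r_s_tauC // r_tauC_pi // rm_tauC // eqxx.
move=> /andP[/and3P[pt /refinesP rs /refinesP rp] /eqP e].
case/and3P: (pt) => /eqP ct tt nt.
case: (rs X Xs) => E Et XE.
have EY : E \subset Y.
  case: (rp E Et) => Y' Y'P EY'; case/set0Pn: Xn0 => x xX.
  have xY' : x \in Y' by apply: (subsetP EY'); apply: (subsetP XE).
  by rewrite (tI_eq tpi Ypi Y'P (subsetP XY x xX) xY').
have := rm_eq tt nt Et XE; rewrite e => eT.
case: (eqVneq (E :\: X) set0) => [E0|En0].
  have EX : E = X by apply/eqP; rewrite eqEsubset XE andbT -setD_eq0 E0.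
  have eT' : tp = tau :\ X.
    rewrite eT E0 -EX.
    have -> : [set set0] :\ (set0 : {set T}) = set0.
      by apply/setP => C; rewrite !inE; case: (C == set0).
    by rewrite setU0.
  by rewrite !inE; apply/orP; left; apply/eqP; rewrite /tau0 eT' setD1K // -EX.
have eS : [set E :\: X] :\ set0 = [set E :\: X].
  apply/setP => B; rewrite !inE.
  by case: (eqVneq B (E :\: X)) => [->|_]; rewrite ?andbF // En0.
rewrite eS in eT.
have CE : E :\: X \notin tau :\ E.
  rewrite !inE negb_and; apply/orP; case: (eqVneq (E :\: X) E) => [->|nCE]; first by left.
  right; apply/negP => Ct; case/set0Pn: En0 => c cC.
  by move/eqP: nCE; apply; apply: (tI_eq tt Ct Et cC); move: cC; rewrite inE => /andP[].
have CXE : (E :\: X) :|: X = E.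
  apply/setP => x; rewrite !inE; move: (subsetP XE x).
  by case: (x \in X) => //=; [move=> /(_ isT) -> | rewrite orbF].
rewrite !inE; apply/orP; right; apply/imsetP; exists (E :\: X).
  by rewrite !inE eT !inE eqxx orbT /=; apply: setSD.
by rewrite /tauC CXE eT [(tau :\ E) :|: _]setUC setU1K // setD1K.
Qed.


Local Open Scope ring_scope.

Lemma sgX_disj B : B \in sg :\ X -> [disjoint B & X].
Proof.
rewrite !inE => /andP[nBX BS]; move/trivIsetP: tsg => h; exact: h.
Qed.

Lemma sg_split : sg = X |: (sg :\ X).
Proof. by rewrite setD1K. Qed.

Lemma XnsgX : X \notin sg :\ X.
Proof. by rewrite !inE eqxx. Qed.

Lemma piY_disj B : B \in pi :\ Y -> [disjoint B & Y].
Proof.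
rewrite !inE => /andP[nBY BP]; move/trivIsetP: tpi => h; exact: h.
Qed.

Lemma piY_notsub E B : B \in pi :\ Y -> E != set0 -> E \subset Y -> ~~ (E \subset B).
Proof.
move=> BP En0 EY; apply: not_sub_disj En0 _.
by rewrite disjoint_sym; apply: disjointWr EY (piY_disj BP).
Qed.

Lemma YZX : Y = (Y :\: X) :|: X.
Proof.
apply/setP => x; rewrite !inE; move: (subsetP XY x).
by case: (x \in X) => //= [/(_ isT) ->|]; rewrite ?orbT ?orbF.
Qed.

Lemma Zn_pi : Y :\: X != set0 -> Y :\: X \notin pi :\ Y.
Proof.
move=> Zn0; rewrite !inE negb_and; apply/orP; case: (eqVneq (Y :\: X) Y) => [->|nZY]; first by left.
right; apply/negP => ZP; case/set0Pn: Zn0 => z zZ.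
move/eqP: nZY; apply; apply: (tI_eq tpi ZP Ypi zZ).
by move: zZ; rewrite inE => /andP[].
Qed.

Lemma prod_rm (g : {set T} -> R) : g set0 = 1 ->
  \prod_(B in rm X pi) g B = g (Y :\: X) * \prod_(B in pi :\ Y) g B.
Proof.
move=> g0; rewrite (rm_eq tpi npi Ypi XY).
case: (eqVneq (Y :\: X) set0) => [Z0|Zn0].
  rewrite Z0 g0 mul1r.
  have -> : [set set0] :\ (set0 : {set T}) = set0.
    by apply/setP => C; rewrite !inE; case: (C == set0).
  by rewrite setU0.
have -> : [set Y :\: X] :\ set0 = [set Y :\: X].
  apply/setP => B; rewrite !inE.
  by case: (eqVneq B (Y :\: X)) => [->|_]; rewrite ?andbF // Zn0.
by rewrite setUC big_setU1 //= Zn_pi.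
Qed.

Lemma W_pi (a b : R) (Q : {set {set T}}) : X \notin Q -> set0 \notin Q ->
  (forall C, C \in Q -> [disjoint C & X]) ->
  w a b (X |: Q) pi = w a b Q (rm X pi) * step a b (nblocks_in Q (Y :\: X)).
Proof.
move=> XQ nQ dQ; rewrite /w (big_setD1 _ Ypi) prod_rm; last by rewrite nb_set0 // f0.
rewrite nb_U1_in // {1}YZX nb_UX // fS.
rewrite (eq_bigr (fun B => f a b (nblocks_in Q B))) => [|B BP]; last first.
  by rewrite nb_U1_out // (piY_notsub BP Xn0 XY).
by rewrite mulrAC.
Qed.

Lemma W5 (a b : R) : w a b sg pi = w a b (rm X sg) (rm X pi) * step a b (nblocks_in (rm X sg) (Y :\: X)).
Proof.
rewrite sg_rm {1}sg_split; apply: W_pi; first exact: XnsgX.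
  by rewrite !inE negb_and nsg orbT.
exact: sgX_disj.
Qed.

Lemma nb_sg_tp C : C \in tp -> nblocks_in sg C = nblocks_in (rm X sg) C.
Proof.
move=> CP; rewrite sg_rm {1}sg_split nb_U1_out //.
by apply: not_sub_disj Xn0 _; rewrite disjoint_sym; apply: tp_disj.
Qed.

Lemma W1 (a b : R) : w a b sg tau0 = w a b (rm X sg) tp.
Proof.
rewrite /w /tau0 big_setU1 ?Xtp //=.
have -> : nblocks_in sg X = 1%N.
  rewrite sg_split nb_U1_in ?XnsgX // -{2}(set0U X) nb_UX ?nb_set0 //.
    by rewrite !inE negb_and nsg orbT.
  exact: sgX_disj.
rewrite f1 mul1r; apply: eq_bigr => B BP; by rewrite nb_sg_tp.
Qed.

Lemma W2 (a b : R) : w a b tau0 pi = w a b tp (rm X pi) * step a b (nblocks_in tp (Y :\: X)).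
Proof. apply: W_pi; [exact: Xtp | exact: ntp | exact: tp_disj]. Qed.

Section TauCW.
Variable C : {set T}.
Hypotheses (CP : C \in tp) (CZ : C \subset Y :\: X).

Lemma CXnD : C :|: X \notin tp :\ C.
Proof. by rewrite !inE negb_and CX_ntp orbT. Qed.

Lemma W3 (a b : R) : w a b sg (tauC C) = w a b (rm X sg) tp * step a b (nblocks_in (rm X sg) C).
Proof.
rewrite /w /tauC big_setU1 ?CXnD //= (big_setD1 _ CP) /=.
have -> : nblocks_in sg (C :|: X) = (nblocks_in (rm X sg) C).+1.
  rewrite sg_rm {1}sg_split nb_U1_in ?XnsgX ?subsetUr // nb_UX //; exact: sgX_disj.
rewrite fS.
rewrite (eq_bigr (fun B => f a b (nblocks_in (rm X sg) B))) => [|B]; last first.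
  by rewrite !inE => /andP[_ BP]; rewrite nb_sg_tp.
by rewrite mulrAC.
Qed.

Lemma W4 (a b : R) : w a b (tauC C) pi = w a b tp (rm X pi).
Proof.
have CY : C \subset Y by apply: subset_trans CZ (subsetDl _ _).
have CXY : C :|: X \subset Y by rewrite subUset CY XY.
rewrite /w (big_setD1 _ Ypi) prod_rm; last by rewrite nb_set0 ?ntp // f0.
have -> : nblocks_in (tauC C) Y = nblocks_in tp (Y :\: X).
  rewrite /tauC nb_U1_in ?CXnD // -(nb_D1_in CP CY) [in nblocks_in tp Y]YZX nb_UX //.
  exact: tp_disj.
congr (_ * _); apply: eq_bigr => B BP.
rewrite nb_U1_out; last by apply: piY_notsub BP (CX_n0 C) CXY.
by rewrite nb_D1_out // (piY_notsub BP (tp_n0 CP) CY).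
Qed.

End TauCW.

Lemma nb_pos C : C \in tp -> (0 < nblocks_in (rm X sg) C)%N.
Proof.
move=> CP; case/set0Pn: (tp_n0 CP) => c cC.
have : c \in cover (rm X sg).
  case/and3P: (partition_rm X psg) => /eqP -> _ _.
  exact: (subsetP (tp_sub CP)).
case/coverP => B BS cB; case: (refines_sub r1 BS) => E Et BE.
have eEC : E = C by apply: (tI_eq ttp Et CP (subsetP BE c cB) cC).
rewrite nbE card_gt0; apply/set0Pn; exists B; by rewrite inE BS -eEC BE.
Qed.

Lemma nb_sum : nblocks_in (rm X sg) (Y :\: X) =
  (\sum_(C in [set C in tp | C \subset Y :\: X]) nblocks_in (rm X sg) C)%N.
Proof.
set S' := rm X sg; set Z := Y :\: X; set Cs := [set C in tp | C \subset Z].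
have nS' : set0 \notin S' by case/and3P: (partition_rm X psg).
have key : forall B, B \in S' -> (\sum_(C in Cs) (B \subset C : nat))%N = (B \subset Z : nat).
  move=> B BS; case: (refines_sub r1 BS) => E Et BE.
  have Bn0 : B != set0 by apply/negP => /eqP B0; move: nS'; rewrite -B0 BS.
  case/set0Pn: Bn0 => x xB.
  have uq : forall C, C \in tp -> B \subset C -> C = E.
    by move=> C CP BC; apply: (tI_eq ttp CP Et (subsetP BC x xB) (subsetP BE x xB)).
  have EZ : (E \subset Z) = (B \subset Z).
    apply/idP/idP => h; first exact: subset_trans BE h.
    case: (refines_sub r2 Et) => E' /rmP[_ [Y' Y'P eE']] EE'; subst E'.
    have xY' : x \in Y' by move: (subsetP EE' x (subsetP BE x xB)); rewrite inE => /andP[].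
    have xY : x \in Y by move: (subsetP h x xB); rewrite inE => /andP[].
    by rewrite (tI_eq tpi Y'P Ypi xY' xY) in EE'.
  case: (boolP (E \subset Z)) => EZb.
    rewrite (bigD1 E) /=; last by rewrite inE Et EZb.
    rewrite BE big1 ?addn0 -?EZ ?EZb // => C /andP[]; rewrite inE => /andP[CP _] nCE.
    by case: (boolP (B \subset C)) => // BC; move/eqP: nCE; rewrite (uq C CP BC).
  rewrite big1 -?EZ ?(negbTE EZb) // => C; rewrite inE => /andP[CP CZ].
  case: (boolP (B \subset C)) => // BC; move: EZb; by rewrite -(uq C CP BC) CZ.
transitivity (\sum_(B in S') (B \subset Z : nat))%N.
  rewrite nbE -sum1_card [LHS]big_mkcond [RHS]big_mkcond; apply: eq_bigr => B _.
  by rewrite inE; case: (B \in S'); case: (B \subset Z).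
rewrite [LHS](eq_bigr (fun B => \sum_(C in Cs) (B \subset C : nat))%N); last first.
  by move=> B BS; rewrite key.
rewrite exchange_big; apply: eq_bigr => C _.
rewrite nbE -sum1_card [RHS]big_mkcond [LHS]big_mkcond; apply: eq_bigr => B _.
by rewrite inE; case: (B \in S'); case: (B \subset C).
Qed.

Lemma fiber_sum (a b c : R) :
  \sum_(tau | (partition tau D && (refines sg tau && refines tau pi)) && (rm X tau == tp))
     w a b sg tau * w b c tau pi
  = w a b (rm X sg) tp * w b c tp (rm X pi) * step a c (nblocks_in (rm X sg) (Y :\: X)).
Proof.
rewrite (eq_bigl (fun tau => tau \in Fib)) => [|tau]; last exact: fib_char.
rewrite /Fib big_setU1 ?tau0_notin //= big_imset /=; last exact: tauC_inj.
rewrite W1 W2 (eq_bigr (fun C => w a b (rm X sg) tp * w b c tp (rm X pi) *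
   step a b (nblocks_in (rm X sg) C))); last first.
  by move=> C; rewrite inE => /andP[CP CZ]; rewrite W3 // W4 // mulrAC.
rewrite mulrA -big_distrr -mulrDr; congr (_ * _).
rewrite nb_sum; set Cs := [set C in tp | C \subset Y :\: X].
have -> : nblocks_in tp (Y :\: X) = #|Cs| by [].
case: (eqVneq Cs set0) => [->|Csn0].
  by rewrite !big_set0 cards0 /step eqxx addr0.
have Cpos : (0 < #|Cs|)%N by rewrite card_gt0.
case/set0Pn: Csn0 => C0 C0s.
have npos : (0 < \sum_(C in Cs) nblocks_in (rm X sg) C)%N.
  rewrite (bigD1 C0) //= ltn_addr //; apply: nb_pos; by move: C0s; rewrite inE => /andP[].
rewrite (eq_bigr (fun C => b - (nblocks_in (rm X sg) C)%:R * a)); last first.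
  move=> C; rewrite inE => /andP[CP _]; by rewrite /step eqn0Ngt nb_pos.
rewrite sumrB sumr_const -mulr_suml -natr_sum /step !eqn0Ngt Cpos npos /=.
by rewrite mulr_natl addrA subrK.
Qed.

End Tp.

Local Open Scope ring_scope.

Lemma step_lemma (a b c : R) :
  \sum_(t | partition t (D :\: X)) mu a b (rm X sg) t * mu b c t (rm X pi)
    = mu a c (rm X sg) (rm X pi) ->
  refines sg pi ->
  \sum_(t | partition t D) mu a b sg t * mu b c t pi = mu a c sg pi.
Proof.
move=> IH rsp.
have rsp' : refines (rm X sg) (rm X pi) by apply: refines_rm.
rewrite sum_between in IH; rewrite sum_between.
rewrite !mu_w rsp' in IH; rewrite !mu_w rsp.
rewrite W5 -IH big_distrl /=.
rewrite (partition_big (rm X) (fun t' => partition t' (D :\: X) &&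
   (refines (rm X sg) t' && refines t' (rm X pi)))) /=; last first.
  move=> t /andP[pt /andP[h1 h2]].
  by rewrite partition_rm ?refines_rm.
apply: eq_bigr => t' /andP[pt' /andP[h1 h2]]; exact: fiber_sum.
Qed.

End Setup.

Section Main.
Variable T : finType.
Variable R : comRingType.
Local Open Scope ring_scope.

Lemma part0 (P : {set {set T}}) : partition P set0 = (P == set0).
Proof.
apply/idP/eqP => [/and3P[/eqP cP _ nP] | ->].
  apply/setP => B; rewrite inE; apply/negbTE/negP => BP.
  have : B \subset cover P by apply: bigcup_sup.
  by rewrite cP subset0 => /eqP B0; rewrite -B0 BP in nP.
apply/and3P; split.
- by rewrite /cover big_set0.
- by apply/trivIsetP => A B; rewrite inE.
- by rewrite inE.
Qed.

Lemma main_ind (a b c : R) n : forall (D : {set T}) (sg pi : {set {set T}}),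
  #|sg| = n -> partition sg D -> partition pi D -> refines sg pi ->
  \sum_(t | partition t D) mu a b sg t * mu b c t pi = mu a c sg pi.
Proof.
elim: n => [|n IH] D sg pi csg psg ppi rsp.
  move/eqP: csg; rewrite cards_eq0 => /eqP sg0.
  have D0 : D = set0 by case/and3P: psg => /eqP <- _ _; rewrite sg0 /cover big_set0.
  rewrite D0 part0 in ppi; move/eqP: ppi => pi0.
  rewrite D0 (eq_bigl (pred1 set0)) => [|t]; last by rewrite part0.
  rewrite big_pred1_eq sg0 pi0.
  have r00 : refines (set0 : {set {set T}}) set0 by apply/refinesP => B; rewrite inE.
  by rewrite !mu_w r00 /w !big_set0 mulr1.
have : sg != set0 by rewrite -card_gt0 csg.
case/set0Pn => X Xs; case: (refines_sub rsp Xs) => Y Ypi XY.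
apply: (step_lemma psg ppi Xs Ypi XY) => //.
apply: IH; [| exact: partition_rm | exact: partition_rm | exact: refines_rm].
rewrite (sg_rm psg Xs); move: csg; rewrite (cardsD1 X) Xs => /eqP; by rewrite eqSS => /eqP.
Qed.

End Main.

Local Open Scope ring_scope.

Theorem theoremA1 (R : comRingType) (T : finType) (q1 q2 q3 : R)
    (sigma pi : {set {set T}}) :
  is_partition sigma -> is_partition pi ->
  \sum_(tau : {set {set T}} | is_partition tau)
     mu q1 q2 sigma tau * mu q2 q3 tau pi
  = mu q1 q3 sigma pi.
Proof.
move=> ps pp; case: (boolP (refines sigma pi)) => rsp.
  exact: (main_ind _ _ _ (erefl _) ps pp rsp).
rewrite mu_w (negbTE rsp) big1 // => t _; rewrite !mu_w.
case h1: (refines sigma t); case h2: (refines t pi); rewrite ?mul0r ?mulr0 //.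
by move: rsp; rewrite (refines_trans h1 h2).
Qed.
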